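(* Let $n,p_1,p_2\ge 1$, $p=p_1+p_2$, let $(A_k)_{k\ge 0}$ be a sequence of real $n\times n$ matrices, $C_1\in\mathbb{R}^{p_1\times n}$, $C_2\in\mathbb{R}^{p_2\times n}$, $C=\begin{pmatrix}C_1\\ C_2\end{pmatrix}$, $Q=Q^T>0$ ($n\times n$), and $R=R^T=\begin{pmatrix}R_{11}&R_{12}\\ R_{21}&R_{22}\end{pmatrix}>0$ ($p\times p$, with $R_{11}$ of size $p_1\times p_1$, $R_{22}$ of size $p_2\times p_2$). Fix $\lambda_1,\lambda_2\in[0,1]$. For $X=X^T\ge 0$ define $$g_{\lambda_1\lambda_2}(k,X)=A_kXA_k^T+Q-\lambda_1\lambda_2A_kXC^T(CXC^T+R)^{-1}CXA_k^T-\lambda_1(1-\lambda_2)A_kXC_1^T(C_1XC_1^T+R_{11})^{-1}C_1XA_k^T-(1-\lambda_1)\lambda_2A_kXC_2^T(C_2XC_2^T+R_{22})^{-1}C_2XA_k^T,$$ and for matrices $K\in\mathbb{R}^{n\times p}$, $K_1\in\mathbb{R}^{n\times p_1}$, $K_2\in\mathbb{R}^{n\times p_2}$ define $$\phi(k,K,K_1,K_2,X)=(1-\lambda_1)(1-\lambda_2)(A_kXA_k^T+Q)+\lambda_1\lambda_2\big((A_k+KC)X(A_k+KC)^T+Q+KRK^T\big)$$ $$+\lambda_1(1-\lambda_2)\big((A_k+K_1C_1)X(A_k+K_1C_1)^T+Q+K_1R_{11}K_1^T\big)+(1-\lambda_1)\lambda_2\big((A_k+K_2C_2)X(A_k+K_2C_2)^T+Q+K_2R_{22}K_2^T\big).$$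 Assume there exist matrices $K_k\in\mathbb{R}^{n\times p}$, $K_{k,1}\in\mathbb{R}^{n\times p_1}$, $K_{k,2}\in\mathbb{R}^{n\times p_2}$ ($k\ge0$) and a symmetric matrix $P>0$ such that $P>\phi(k,K_k,K_{k,1},K_{k,2},P)$ for all $k\ge 0$. Then for any symmetric initial condition $P_0\ge 0$, the sequence $P_{k+1}=g_{\lambda_1\lambda_2}(k,P_k)$ is bounded as $k\to\infty$.
   Context: All matrix inequalities are in the Loewner order: $M>N$ means $M-N$ is positive definite, $M\ge N$ means $M-N$ is positive semidefinite. The recursion is the covariance recursion of a two-channel extended Kalman filter with measurement arrival probabilities $\lambda_1,\lambda_2$ and linearized transition matrices $A_k$. *)

(* Defs.v *)
From HB Require Import structures.
From mathcomp Require Import all_boot all_order all_algebra.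
From mathcomp Require Import reals.
Set Implicit Arguments. Unset Strict Implicit. Unset Printing Implicit Defensive.
Import Order.TTheory GRing.Theory Num.Theory.
Local Open Scope ring_scope.

Definition posdef (R : realType) (n : nat) (M : 'M[R]_n) : Prop :=
  M^T = M /\ forall x : 'cV[R]_n, x != 0 -> 0 < (x^T *m M *m x) 0 0.

Definition psd (R : realType) (n : nat) (M : 'M[R]_n) : Prop :=
  M^T = M /\ forall x : 'cV[R]_n, 0 <= (x^T *m M *m x) 0 0.

Definition gmap (R : realType) (n p1 p2 : nat) (A : nat -> 'M[R]_n)
  (C1 : 'M[R]_(p1, n)) (C2 : 'M[R]_(p2, n)) (Q : 'M[R]_n)
  (Rm : 'M[R]_(p1 + p2)) (lam1 lam2 : R) (k : nat) (X : 'M[R]_n) : 'M[R]_n :=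
  let C := col_mx C1 C2 in
  let R11 := ulsubmx Rm in
  let R22 := drsubmx Rm in
  A k *m X *m (A k)^T + Q
  - (lam1 * lam2) *: (A k *m X *m C^T *m invmx (C *m X *m C^T + Rm) *m C *m X *m (A k)^T)
  - (lam1 * (1 - lam2)) *: (A k *m X *m C1^T *m invmx (C1 *m X *m C1^T + R11) *m C1 *m X *m (A k)^T)
  - ((1 - lam1) * lam2) *: (A k *m X *m C2^T *m invmx (C2 *m X *m C2^T + R22) *m C2 *m X *m (A k)^T).

Definition phimap (R : realType) (n p1 p2 : nat) (A : nat -> 'M[R]_n)
  (C1 : 'M[R]_(p1, n)) (C2 : 'M[R]_(p2, n)) (Q : 'M[R]_n)
  (Rm : 'M[R]_(p1 + p2)) (lam1 lam2 : R) (k : nat)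
  (K : 'M[R]_(n, p1 + p2)) (K1 : 'M[R]_(n, p1)) (K2 : 'M[R]_(n, p2))
  (X : 'M[R]_n) : 'M[R]_n :=
  let C := col_mx C1 C2 in
  let R11 := ulsubmx Rm in
  let R22 := drsubmx Rm in
  ((1 - lam1) * (1 - lam2)) *: (A k *m X *m (A k)^T + Q)
  + (lam1 * lam2) *: ((A k + K *m C) *m X *m (A k + K *m C)^T + Q + K *m Rm *m K^T)
  + (lam1 * (1 - lam2)) *: ((A k + K1 *m C1) *m X *m (A k + K1 *m C1)^T + Q + K1 *m R11 *m K1^T)
  + ((1 - lam1) * lam2) *: ((A k + K2 *m C2) *m X *m (A k + K2 *m C2)^T + Q + K2 *m R22 *m K2^T).

(* Main.v *)
Require Import Defs.
From HB Require Import structures.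
From mathcomp Require Import all_boot all_order all_algebra.
From mathcomp Require Import reals lra ring.
From mathcomp Require Import classical_sets boolp functions topology normedtype derive.
Set Implicit Arguments. Unset Strict Implicit. Unset Printing Implicit Defensive.
Import Order.TTheory GRing.Theory Num.Theory.
Import numFieldNormedType.Exports.
Local Open Scope classical_set_scope.
Local Open Scope ring_scope.
Section S.
Variable R : realType.

Lemma cont_sum (T : topologicalType) (I : finType) (F : I -> T -> R) :
  (forall i, continuous (F i)) -> continuous (fun y => \sum_i F i y).
Proof.
move=> H y.
rewrite -(fct_sumE (index_enum I) xpredT F).
elim/big_ind: _ => //.
- exact: cst_continuous.
- by move=> f g Hf Hg; apply: continuousD.
Qed.

Lemma entry_le_norm n (y : 'rV[R]_n) i : `|y 0 i| <= `|y|.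
Proof.
have /mapP[j Hj ->] : `|y ord0 i| \in [seq `|y x.1 x.2| | x : 'I_1 * 'I_n].
  by apply/mapP; exists (ord0, i) => //=; rewrite mem_enum.
by rewrite [leRHS]/Num.norm /= mx_normrE; apply/bigmax_geP; right => /=; exists j.
Qed.

Definition q n (M : 'M[R]_n) (x : 'cV[R]_n) : R := (x^T *m M *m x) 0 0.

Lemma qE n (M : 'M[R]_n) x :
  q M x = \sum_j \sum_i x i 0 * M i j * x j 0.
Proof.
rewrite /q mxE; apply: eq_bigr => j _; rewrite mxE big_distrl /=.
by apply: eq_bigr => i _; rewrite mxE.
Qed.

Lemma qZx n (M : 'M[R]_n) a x : q M (a *: x) = a * a * q M x.
Proof.
rewrite /q; have -> : (a *: x)^T = a *: x^T by apply/matrixP=> i j; rewrite !mxE.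
by rewrite -!scalemxAl -scalemxAr !mxE mulrA.
Qed.

Lemma sphere_compact n : compact [set y : 'rV[R]_n | `|y| = 1].
Proof.
apply: bounded_closed_compact.
  exists 1; split => // M /= M1 y /= ->; exact: ltW.
rewrite (_ : [set y : 'rV[R]_n | `|y| = 1] = Num.norm @^-1` [set 1]) //.
apply: preimage_closed; first idtac.
2: exact: closed_eq.
move=> y _; exact: norm_continuous.
Qed.

Lemma dominate n (hn : (0 < n)%N) (P M : 'M[R]_n) :
  (forall x, x != 0 -> 0 < q P x) -> exists c, forall x, q M x <= c * q P x.
Proof.
move=> HP.
pose f (y : 'rV[R]_n) := q P y^T.
have fE y : f y = \sum_j \sum_i y 0 i * P i j * y 0 j.
  by rewrite /f qE; apply: eq_bigr => j _; apply: eq_bigr => i _; rewrite !mxE.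
have fc : continuous f.
  rewrite (_ : f = fun y => \sum_j \sum_i y 0 i * P i j * y 0 j); last first.
    by apply: funext => y; rewrite fE.
  apply: cont_sum => j; apply: cont_sum => i.
  move=> y.
  apply: (@continuousM R _ (fun y : 'rV[R]_n => y 0 i * P i j) (fun y => y 0 j)); last exact: coord_continuous.
  apply: (@continuousM R _ (fun y : 'rV[R]_n => y 0 i) (fun y => P i j)); first exact: coord_continuous.
  exact: cst_continuous.
set S := [set y : 'rV[R]_n | `|y| = 1].
have S0 : S !=set0.
  pose y0 : 'rV[R]_n := const_mx 1.
  have y00 : y0 != 0.
    apply/eqP => /matrixP /(_ 0 (Ordinal hn)); rewrite !mxE => /eqP.
    by rewrite oner_eq0.
  exists (`|y0|^-1 *: y0); rewrite /S /= normrZ normrV ?unitfE ?normr_eq0 //.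
  by rewrite normr_id mulVf // normr_eq0.
have [y0 Sy0 ymin] := compact_EVT_min S0 (@sphere_compact n)
  (continuous_subspaceT fc).
have y0n : `|y0| = 1 by move: Sy0; rewrite inE.
have m0 : 0 < f y0.
  apply: HP; apply/eqP => /(congr1 trmx); rewrite trmxK trmx0 => y00.
  by move: y0n; rewrite y00 normr0 => /eqP; rewrite eq_sym oner_eq0.
pose Ms := \sum_j \sum_i `|M i j|.
have Ms0 : 0 <= Ms by apply: sumr_ge0 => j _; apply: sumr_ge0.
exists (Ms / f y0) => x.
have [->|x0] := eqVneq x 0.
  by rewrite /q !mulmx0 !mxE mulr0.
pose y := x^T; pose r := `|y|.
have r0 : 0 < r by rewrite normr_gt0 /y; apply: contra x0 => /eqP/(congr1 trmx); rewrite trmxK trmx0 => ->.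
have fy : r ^+ 2 * f y0 <= f y.
  have Sy : (r^-1 *: y) \in S.
    by rewrite inE /S /= normrZ normrV ?unitfE ?gt_eqF // ger0_norm ?invr_ge0 ?ltW // mulVf ?gt_eqF.
  have := ymin _ Sy.
  have -> : f (r^-1 *: y) = q P (r^-1 *: x) by rewrite /f; congr q; apply/matrixP=> a b; rewrite !mxE.
  rewrite qZx /f /y trmxK.
  move=> H; have := ler_wpM2l (_ : 0 <= r ^+ 2) H; rewrite mulrA mulrA.
  rewrite (_ : r ^+ 2 * r^-1 / r = 1) ?mul1r //; last first.
    by rewrite expr2 mulfK ?gt_eqF // mulfV ?gt_eqF.
  by apply; rewrite exprn_ge0 // ltW.
have qM : q M x <= Ms * r ^+ 2.
  rewrite qE /Ms big_distrl /=; apply: ler_sum => j _.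
  rewrite big_distrl /=; apply: ler_sum => i _.
  apply: le_trans (ler_norm _) _.
  rewrite !normrM expr2 [`|x i 0| * _]mulrC -mulrA; apply: ler_wpM2l => //.
  apply: ler_pM => //.
    by rewrite (_ : x i 0 = y 0 i) ?entry_le_norm // mxE.
  by rewrite (_ : x j 0 = y 0 j) ?entry_le_norm // mxE.
apply: (le_trans qM).
rewrite -mulrA; apply: ler_wpM2l => //.
rewrite ler_pdivlMl //.
by rewrite /f /y trmxK mulrC in fy.
Qed.
Lemma trD m n (A B : 'M[R]_(m,n)) : (A + B)^T = A^T + B^T.
Proof. by apply/matrixP=> i j; rewrite !mxE. Qed.
Lemma trN m n (A : 'M[R]_(m,n)) : (- A)^T = - A^T.
Proof. by apply/matrixP=> i j; rewrite !mxE. Qed.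
Lemma trB m n (A B : 'M[R]_(m,n)) : (A - B)^T = A^T - B^T.
Proof. by rewrite trD trN. Qed.
Lemma trZ m n a (A : 'M[R]_(m,n)) : (a *: A)^T = a *: A^T.
Proof. by apply/matrixP=> i j; rewrite !mxE. Qed.

Lemma qD n (M N : 'M[R]_n) x : q (M + N) x = q M x + q N x.
Proof. by rewrite /q mulmxDr mulmxDl mxE. Qed.
Lemma qN n (M : 'M[R]_n) x : q (- M) x = - q M x.
Proof. by rewrite /q mulmxN mulNmx mxE. Qed.
Lemma qB n (M N : 'M[R]_n) x : q (M - N) x = q M x - q N x.
Proof. by rewrite qD qN. Qed.
Lemma qZ n a (M : 'M[R]_n) x : q (a *: M) x = a * q M x.
Proof. by rewrite /q -scalemxAr -scalemxAl mxE. Qed.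
Lemma q_congr m n (B : 'M[R]_(n, m)) (N : 'M[R]_m) x :
  q (B *m N *m B^T) x = q N (B^T *m x).
Proof. by rewrite /q trmx_mul trmxK !mulmxA. Qed.
Lemma q0 n (M : 'M[R]_n) : q M 0 = 0.
Proof. by rewrite /q mulmx0 mxE. Qed.

Lemma posdef_unit n (S : 'M[R]_n) :
  (forall y, y != 0 -> 0 < q S y) -> S \in unitmx.
Proof.
move=> H; rewrite unitmxE unitfE; apply/negP => /det0P [v v0 vS].
have : v^T != 0 by apply: contra v0 => /eqP/(congr1 trmx); rewrite trmxK trmx0 => ->.
move=> /H; rewrite /q trmxK vS mul0mx mxE ltxx //.
Qed.

Lemma complete_sq n p (A X : 'M[R]_n) (C : 'M[R]_(p, n)) (Rr : 'M[R]_p)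
  (K : 'M[R]_(n, p)) x :
  X^T = X -> (C *m X *m C^T + Rr)^T = C *m X *m C^T + Rr ->
  C *m X *m C^T + Rr \in unitmx ->
  let S := C *m X *m C^T + Rr in
  let Si := invmx S in
  let G := A *m X *m C^T *m Si in
  q ((A + K *m C) *m X *m (A + K *m C)^T + K *m Rr *m K^T) x =
  q (A *m X *m A^T) x - q (A *m X *m C^T *m Si *m C *m X *m A^T) x
  + q S ((K + G)^T *m x).
Proof.
move=> hX hS hU S Si G.
have hSi : Si^T = Si by rewrite /Si trmx_inv hS.
rewrite -q_congr.
have GT : G^T = Si *m C *m X *m A^T.
  by rewrite /G !trmx_mul trmxK hX hSi !mulmxA.
have h2 : K *m S *m G^T = K *m C *m X *m A^T.
  by rewrite GT !mulmxA -(mulmxA K S Si) mulmxV // mulmx1.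
have h3 : G *m S *m K^T = A *m X *m C^T *m K^T.
  by rewrite /G -(mulmxA _ Si S) mulVmx // mulmx1.
have h4 : G *m S *m G^T = A *m X *m C^T *m Si *m C *m X *m A^T.
  by rewrite GT /G -(mulmxA _ Si S) mulVmx // mulmx1 !mulmxA.
have h5 : q (K *m S *m K^T) x = q (K *m C *m X *m C^T *m K^T) x + q (K *m Rr *m K^T) x.
  by rewrite /S mulmxDr mulmxDl qD !mulmxA.
rewrite (trD K G) (mulmxDl K G S) (mulmxDl (K *m S) (G *m S)) (mulmxDr (K *m S)) (mulmxDr (G *m S)) !qD h2 h3 h4 h5.
rewrite trD trmx_mul !mulmxDl !mulmxDr !qD !mulmxA.
lra.
Qed.

Lemma psd_of_posdef n (M : 'M[R]_n) :
  (forall y, y != 0 -> 0 < q M y) -> forall y, 0 <= q M y.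
Proof. by move=> H y; have [->|/H/ltW //] := eqVneq y 0; rewrite q0. Qed.

Lemma bracket n p (A X : 'M[R]_n) (C : 'M[R]_(p, n)) (Rr : 'M[R]_p) x :
  X^T = X -> (forall y, 0 <= q X y) -> Rr^T = Rr ->
  (forall y, y != 0 -> 0 < q Rr y) ->
  0 <= q (A *m X *m A^T) x
       - q (A *m X *m C^T *m invmx (C *m X *m C^T + Rr) *m C *m X *m A^T) x
  /\ forall K : 'M[R]_(n, p),
    q (A *m X *m A^T) x
       - q (A *m X *m C^T *m invmx (C *m X *m C^T + Rr) *m C *m X *m A^T) x
    <= q ((A + K *m C) *m X *m (A + K *m C)^T + K *m Rr *m K^T) x.
Proof.
move=> hX hXp hR hRp.
have hRp' := psd_of_posdef hRp.
have hSp : forall y, y != 0 -> 0 < q (C *m X *m C^T + Rr) y.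
  by move=> y y0; rewrite qD q_congr; apply: ltr_wpDl => //; apply: hRp.
have hS : (C *m X *m C^T + Rr)^T = C *m X *m C^T + Rr.
  by rewrite trD !trmx_mul trmxK hX hR mulmxA.
have hU := posdef_unit hSp.
have key K := @complete_sq n p A X C Rr K x hX hS hU.
split.
  pose G := A *m X *m C^T *m invmx (C *m X *m C^T + Rr).
  have := key (- G); rewrite /= -/G addNr trmx0 mul0mx q0 addr0 => <-.
  by rewrite qD !q_congr addr_ge0.
move=> K; rewrite key /=; apply: ler_wpDr.
  exact: (psd_of_posdef hSp).
by [].
Qed.

Lemma q_ul p1 p2 (M : 'M[R]_(p1 + p2)) y : q (ulsubmx M) y = q M (col_mx y 0).
Proof.
by rewrite -{2}(submxK M) /q tr_col_mx mul_row_block trmx0 !mul0mx !addr0 mul_row_col mulmx0 addr0.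
Qed.
Lemma q_dr p1 p2 (M : 'M[R]_(p1 + p2)) y : q (drsubmx M) y = q M (col_mx 0 y).
Proof.
by rewrite -{2}(submxK M) /q tr_col_mx mul_row_block trmx0 !mul0mx !add0r mul_row_col mulmx0 add0r.
Qed.

Lemma T_sym n p (A X : 'M[R]_n) (C : 'M[R]_(p, n)) (Rr : 'M[R]_p) :
  X^T = X -> Rr^T = Rr ->
  (A *m X *m C^T *m invmx (C *m X *m C^T + Rr) *m C *m X *m A^T)^T =
  A *m X *m C^T *m invmx (C *m X *m C^T + Rr) *m C *m X *m A^T.
Proof.
move=> hX hR.
have hS : (C *m X *m C^T + Rr)^T = C *m X *m C^T + Rr.
  by rewrite trD !trmx_mul trmxK hX hR mulmxA.
by rewrite !trmx_mul !trmxK trmx_inv hS hX !mulmxA.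
Qed.

Lemma AXA_sym n (A X : 'M[R]_n) : X^T = X -> (A *m X *m A^T)^T = A *m X *m A^T.
Proof. by move=> hX; rewrite !trmx_mul trmxK hX mulmxA. Qed.

Lemma q_plus n (M : 'M[R]_n) x y :
  q M (x + y) = q M x + q M y + (x^T *m M *m y) 0 0 + (y^T *m M *m x) 0 0.
Proof.
rewrite /q trD !mulmxDl !mulmxDr !mxE; lra.
Qed.

Lemma q_minus n (M : 'M[R]_n) x y :
  q M (x - y) = q M x + q M y - (x^T *m M *m y) 0 0 - (y^T *m M *m x) 0 0.
Proof.
rewrite /q trB !mulmxBl !mulmxBr !mxE; lra.
Qed.

Lemma bil_e n (M : 'M[R]_n) i j :
  ((delta_mx i 0 : 'cV[R]_n)^T *m M *m (delta_mx j 0 : 'cV[R]_n)) 0 0 = M i j.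
Proof. by rewrite trmx_delta -rowE -colE !mxE. Qed.

Lemma q_e n (M : 'M[R]_n) i : q M (delta_mx i 0 : 'cV[R]_n) = M i i.
Proof. exact: bil_e. Qed.

Lemma entry_bound n (M : 'M[R]_n) i j :
  M^T = M -> (forall y, 0 <= q M y) -> `|M i j| <= (M i i + M j j) / 2.
Proof.
move=> hs hp.
have sij : M j i = M i j by rewrite -{1}hs mxE.
have h1 := hp ((delta_mx i 0 : 'cV[R]_n) + delta_mx j 0).
have h2 := hp ((delta_mx i 0 : 'cV[R]_n) - delta_mx j 0).
rewrite q_plus !q_e !bil_e sij in h1.
rewrite q_minus !q_e !bil_e sij in h2.
rewrite ler_norml; apply/andP; split; lra.
Qed.
End S.

Lemma diag_le_sum (R : realType) n (P : 'M[R]_n) i :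
  (forall y, 0 <= q P y) -> P i i <= \sum_l P l l.
Proof.
move=> hp; rewrite (bigD1 i) //= lerDl; apply: sumr_ge0 => l _.
by rewrite -q_e.
Qed.

Theorem theorem1 (R : realType) (n p1 p2 : nat)
  (hn : (0 < n)%N) (hp1 : (0 < p1)%N) (hp2 : (0 < p2)%N)
  (A : nat -> 'M[R]_n) (C1 : 'M[R]_(p1, n)) (C2 : 'M[R]_(p2, n))
  (Q : 'M[R]_n) (Rm : 'M[R]_(p1 + p2)) (lam1 lam2 : R) :
  posdef Q -> posdef Rm ->
  0 <= lam1 <= 1 -> 0 <= lam2 <= 1 ->
  (exists (K : nat -> 'M[R]_(n, p1 + p2)) (K1 : nat -> 'M[R]_(n, p1))
          (K2 : nat -> 'M[R]_(n, p2)) (P : 'M[R]_n),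
      posdef P /\
      forall k : nat,
        posdef (P - phimap A C1 C2 Q Rm lam1 lam2 k (K k) (K1 k) (K2 k) P)) ->
  forall (P0 : 'M[R]_n), psd P0 ->
  forall Pk : nat -> 'M[R]_n,
    Pk 0%N = P0 ->
    (forall k : nat, Pk k.+1 = gmap A C1 C2 Q Rm lam1 lam2 k (Pk k)) ->
    exists c : R, forall (k : nat) (i j : 'I_n), `|Pk k i j| <= c.
Proof.
move=> [hQs hQp] [hRs hRp] /andP[l10 l11] /andP[l20 l21]
  [K [K1 [K2 [P [[hPs hPp] hPk]]]]] P0 [hP0s hP0p] Pk hPk0 hrec.
have ha : 0 <= lam1 * lam2 by apply: mulr_ge0.
have hb : 0 <= lam1 * (1 - lam2) by apply: mulr_ge0; rewrite // subr_ge0.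
have hc : 0 <= (1 - lam1) * lam2 by apply: mulr_ge0; rewrite // subr_ge0.
have hd : 0 <= (1 - lam1) * (1 - lam2) by apply: mulr_ge0; rewrite subr_ge0.
have hQp' := psd_of_posdef hQp.
have hRp' := psd_of_posdef hRp.
have hPp' := psd_of_posdef hPp.
have hR11s : (ulsubmx Rm)^T = ulsubmx Rm by rewrite trmx_ulsub hRs.
have hR22s : (drsubmx Rm)^T = drsubmx Rm by rewrite trmx_drsub hRs.
have hR11p : forall y, y != 0 -> 0 < q (ulsubmx Rm) y.
  move=> y y0; rewrite q_ul; apply: hRp; apply: contra y0 => /eqP h.
  have : col_mx y 0 = col_mx 0 0 :> 'cV[R]_(p1 + p2) by rewrite col_mx0.
  by move=> /eq_col_mx [-> _].
have hR22p : forall y, y != 0 -> 0 < q (drsubmx Rm) y.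
  move=> y y0; rewrite q_dr; apply: hRp; apply: contra y0 => /eqP h.
  have : col_mx 0 y = col_mx 0 0 :> 'cV[R]_(p1 + p2) by rewrite col_mx0.
  by move=> /eq_col_mx [_ ->].
have hR11p' := psd_of_posdef hR11p.
have hR22p' := psd_of_posdef hR22p.
have key : forall k X, X^T = X -> (forall y, 0 <= q X y) -> forall x,
    0 <= q (gmap A C1 C2 Q Rm lam1 lam2 k X) x /\
    q (gmap A C1 C2 Q Rm lam1 lam2 k X) x <=
    q (phimap A C1 C2 Q Rm lam1 lam2 k (K k) (K1 k) (K2 k) X) x.
  move=> k X hX hXp x.
  have [b1 B1] := @bracket R n (p1 + p2) (A k) X (col_mx C1 C2) Rm x hX hXp hRs hRp.
  have [b2 B2] := @bracket R n p1 (A k) X C1 (ulsubmx Rm) x hX hXp hR11s hR11p.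
  have [b3 B3] := @bracket R n p2 (A k) X C2 (drsubmx Rm) x hX hXp hR22s hR22p.
  have Ha := B1 (K k); have Hb := B2 (K1 k); have Hc := B3 (K2 k).
  rewrite qD in Ha; rewrite qD in Hb; rewrite qD in Hc.
  have hAXA : 0 <= q (A k *m X *m (A k)^T) x by rewrite q_congr.
  have hq := hQp' x.
  have e1 := mulr_ge0 ha b1; have e2 := mulr_ge0 hb b2; have e3 := mulr_ge0 hc b3.
  have e4 := mulr_ge0 hd hAXA.
  move: Ha; rewrite -subr_ge0 => Ha; have f1 := mulr_ge0 ha Ha.
  move: Hb; rewrite -subr_ge0 => Hb; have f2 := mulr_ge0 hb Hb.
  move: Hc; rewrite -subr_ge0 => Hc; have f3 := mulr_ge0 hc Hc.
  rewrite /gmap /phimap /= !qB !qD !qZ !qD.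
  split; lra.
have gsym : forall k X, X^T = X ->
    (gmap A C1 C2 Q Rm lam1 lam2 k X)^T = gmap A C1 C2 Q Rm lam1 lam2 k X.
  move=> k X hX; rewrite /gmap /= !trB !trD !trZ AXA_sym // hQs.
  by rewrite (T_sym _ _ hX hRs) (T_sym _ _ hX hR11s) (T_sym _ _ hX hR22s).
pose lx k X x := (1 - lam1) * (1 - lam2) * q (A k *m X *m (A k)^T) x
  + lam1 * lam2 * q ((A k + K k *m col_mx C1 C2) *m X *m (A k + K k *m col_mx C1 C2)^T) x
  + lam1 * (1 - lam2) * q ((A k + K1 k *m C1) *m X *m (A k + K1 k *m C1)^T) x
  + (1 - lam1) * lam2 * q ((A k + K2 k *m C2) *m X *m (A k + K2 k *m C2)^T) x.
pose u k x := q Q x + lam1 * lam2 * q (K k *m Rm *m (K k)^T) x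
  + lam1 * (1 - lam2) * q (K1 k *m ulsubmx Rm *m (K1 k)^T) x
  + (1 - lam1) * lam2 * q (K2 k *m drsubmx Rm *m (K2 k)^T) x.
have phiE : forall k X x,
    q (phimap A C1 C2 Q Rm lam1 lam2 k (K k) (K1 k) (K2 k) X) x = lx k X x + u k x.
  move=> k X x; rewrite /phimap /= !qD !qZ !qD /lx /u; ring.
have lx_mono : forall k X B, 0 <= B -> (forall y, q X y <= B * q P y) ->
    forall x, lx k X x <= B * lx k P x.
  move=> k X B B0 HB x; rewrite /lx !q_congr.
  have g1 := ler_wpM2l hd (HB ((A k)^T *m x)).
  have g2 := ler_wpM2l ha (HB ((A k + K k *m col_mx C1 C2)^T *m x)).
  have g3 := ler_wpM2l hb (HB ((A k + K1 k *m C1)^T *m x)).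
  have g4 := ler_wpM2l hc (HB ((A k + K2 k *m C2)^T *m x)).
  lra.
have u0 : forall k x, 0 <= u k x.
  move=> k x; rewrite /u !q_congr.
  have := hQp' x; have := hRp' ((K k)^T *m x); have := hR11p' ((K1 k)^T *m x);
  have := hR22p' ((K2 k)^T *m x).
  move=> h1 h2 h3 h4.
  have := mulr_ge0 ha h3; have := mulr_ge0 hb h2; have := mulr_ge0 hc h1.
  lra.
have lxPu : forall k x, lx k P x + u k x <= q P x.
  move=> k x; rewrite -phiE -subr_ge0 -qB.
  by have [_ /psd_of_posdef] := hPk k; apply.
have [c0 Hc0] := dominate hn P0 hPp.
pose B := Num.max c0 1.
have B1 : 1 <= B by rewrite le_max lexx orbT.
have Bc0 : c0 <= B by rewrite le_max lexx.
have Inv : forall k, (Pk k)^T = Pk k /\ (forall y, 0 <= q (Pk k) y) /\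
    (forall y, q (Pk k) y <= B * q P y).
  elim=> [|k [hs [hp hbd]]].
    rewrite hPk0; split => //; split => // y.
    apply: le_trans (Hc0 y) _; apply: ler_wpM2r => //.
  rewrite hrec; split; first exact: gsym.
  split; first by move=> y; have [] := key k _ hs hp y.
  move=> y; have [_ h1] := key k _ hs hp y.
  rewrite phiE in h1.
  have h2 := lx_mono k _ B (le_trans ler01 B1) hbd y.
  have h3 := lxPu k y.
  have h4 := ler_wpM2l (le_trans ler01 B1) (_ : lx k P y <= q P y - u k y).
  have h5 := mulr_ge0 (_ : 0 <= B - 1) (u0 k y).
  have := h4 (ltac:(lra)); have := h5 (ltac:(rewrite subr_ge0)).
  lra.
exists (B * \sum_l P l l) => k i j.
have [hs [hp hbd]] := Inv k.
apply: le_trans (entry_bound i j hs hp) _.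
have := hbd (delta_mx i 0); have := hbd (delta_mx j 0); rewrite !q_e => h1 h2.
have := ler_wpM2l (le_trans ler01 B1) (diag_le_sum i hPp').
have := ler_wpM2l (le_trans ler01 B1) (diag_le_sum j hPp').
lra.
Qed.
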